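(* For every $n$ that is a power of a prime, there exists a split graph $G_n$ with $2(n^2+n+1)$ vertices such that every fractional $2$-guidance system and every weak $2$-guidance system of $G_n$ has maximum outdegree at least $(n+1)/2$.
   Context: All graphs are finite, simple and undirected. A split graph is a graph whose vertex set can be partitioned into a clique and an independent set. For $u,v$ at distance $\ell$, $\Gamma_G(u,v)$ is the set of neighbors of $u$ at distance $\ell-1$ from $v$. A partial orientation of $G$ is a directed graph $\vec{H}$ on $V(G)$ with every $(u,v)\in E(\vec{H})$ satisfying $uv\in E(G)$. $B_{\vec{H}}(v,a)$ is the set of vertices reachable from $v$ by a directed path of length at most $a$. A weak $r$-guidance system is a partial orientation $\vec{H}$ such that for any distinct $u,v$ at distance $\ell\le r$ there exist non-negative integers $a,b$ with $a+b=\ell-1$ such that $G$ has an edge between $B_{\vec{H}}(u,a)$ and $B_{\vec{H}}(v,b)$. A fractional orientation assigns a non-negative real $p(u,v)$ to each ordered pair of adjacent vertices; its maximum outdegree is $\max_u\sum_{v:uv\in E(G)}p(u,v)$. A fractional $r$-guidance system is a fractional orientation with $\sum_{y\in\Gamma_G(u,v)}p(u,y)+\sum_{y\in\Gamma_G(v,u)}p(v,y)\ge1$ for all $u,v$ at distance between $2$ and $r$. *)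

(* Defs.v *)
From HB Require Import structures.
From mathcomp Require Import all_boot all_order all_algebra.
Set Implicit Arguments. Unset Strict Implicit. Unset Printing Implicit Defensive.
Import Order.TTheory GRing.Theory Num.Theory.

Section GraphDefs.
Variable T : finType.

Definition simple_graph (e : rel T) : Prop := symmetric e /\ irreflexive e.

Definition split_graph (e : rel T) : Prop :=
  exists K : {set T},
    (forall x y, x \in K -> y \in K -> x != y -> e x y) /\
    (forall x y, x \notin K -> y \notin K -> ~~ e x y).

Fixpoint within (e : rel T) (k : nat) (u v : T) : bool :=
  match k with
  | 0 => u == v
  | k'.+1 => within e k' u v || [exists w, within e k' u w && e w v]
  end.

Definition dist_is (e : rel T) (u v : T) (l : nat) : bool :=
  within e l u v && (if l is l'.+1 then ~~ within e l' u v else true).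

Definition Gamma (e : rel T) (l : nat) (u v : T) : {set T} :=
  [set y | e u y && dist_is e y v l.-1].

Definition partial_orientation (e h : rel T) : Prop :=
  forall u v, h u v -> e u v.

(* B_H(v,a) membership is [within h a v x] *)
Definition weak_guidance (e h : rel T) (r : nat) : Prop :=
  partial_orientation e h /\
  forall u v l, u != v -> dist_is e u v l -> l <= r ->
    exists a b, a + b = l.-1 /\
      exists x y, [&& within h a u x, within h b v y & e x y].

Definition max_outdeg_dir (h : rel T) : nat :=
  \max_(u : T) #|[set v | h u v]|.

Variable R : realFieldType.
Local Open Scope ring_scope.

Definition fractional_orientation (e : rel T) (p : T -> T -> R) : Prop :=
  forall u v, e u v -> 0 <= p u v.

Definition max_outdeg_frac (e : rel T) (p : T -> T -> R) : R :=
  \big[Num.max/0]_(u : T) \sum_(v | e u v) p u v.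

Definition fractional_guidance (e : rel T) (p : T -> T -> R) (r : nat) : Prop :=
  fractional_orientation e p /\
  forall u v l, dist_is e u v l -> (2 <= l)%N -> (l <= r)%N ->
    1 <= \sum_(y in Gamma e l u v) p u y + \sum_(y in Gamma e l v u) p v y.
End GraphDefs.

Definition prime_power (n : nat) : Prop :=
  exists p k, [/\ prime p, (0 < k)%N & n = p ^ k].

(* Main.v *)
Require Import Defs.
From mathcomp Require Import all_boot all_order all_algebra.
From mathcomp Require Import zify ring lra.
Import Order.TTheory GRing.Theory Num.Theory.
Set Implicit Arguments. Unset Strict Implicit.
Local Open Scope ring_scope.

Lemma core (R : realFieldType) (m : nat) (q : 'I_m -> 'I_m -> R) (M : R) :
  (forall i j, i != j -> 1 <= q i j + q j i) ->
  (forall i, \sum_(j | j != i) q i j <= M) ->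
  (0 < m)%N -> ((m.-1)%:R / 2 <= M)%R.
Proof.
move=> Hq HM m0.
have H1 : (m * m.-1)%:R <= \sum_(i < m) \sum_(j | j != i) (q i j + q j i) :> R.
  have -> : (m * m.-1)%N = (\sum_(i < m) \sum_(j < m | j != i) 1)%N.
    rewrite (eq_bigr (fun _ => m.-1)); last first.
      move=> i _; rewrite sum1_card.
      have := cardC1 i; rewrite card_ord => <-; apply: eq_card => j; by rewrite !inE.
    by rewrite sum_nat_const card_ord.
  rewrite natr_sum; apply: ler_sum => i _; rewrite natr_sum; apply: ler_sum => j ji.
  by apply: Hq; rewrite eq_sym.
have H2 : \sum_(i < m) \sum_(j | j != i) (q i j + q j i) =
   2 * \sum_(i < m) \sum_(j | j != i) q i j.
  under eq_bigr do rewrite big_split /=.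
  rewrite big_split /=.
  have -> : \sum_(i < m) \sum_(j | j != i) q j i = \sum_(i < m) \sum_(j | j != i) q i j.
    rewrite (exchange_big_dep (fun _ => true)) //=.
    by apply: eq_bigr => i _; apply: eq_bigl => j; rewrite eq_sym.
  by rewrite mulr2n mulrDl mul1r.
have H3 : \sum_(i < m) \sum_(j | j != i) q i j <= m%:R * M.
  have -> : m%:R * M = \sum_(i < m) M by rewrite sumr_const card_ord mulr_natl.
  apply: ler_sum => i _; exact: HM.
have Hm : 0 < m%:R :> R by rewrite ltr0n.
rewrite ler_pdivrMr // -(ler_pM2l Hm).
rewrite H2 natrM in H1.
nra.
Qed.

Lemma sum_inj_le (R : numDomainType) (I T : finType) (P : pred I) (Q : pred T)
  (f : I -> T) (F : T -> R) :
  {in P &, injective f} -> (forall j, P j -> Q (f j)) -> (forall v, Q v -> 0 <= F v) ->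
  \sum_(j | P j) F (f j) <= \sum_(v | Q v) F v.
Proof.
move=> inj PQ F0.
have -> : \sum_(j | P j) F (f j) = \sum_(j in f @: P) F j.
  by rewrite (big_imset _ inj).
rewrite (bigID (mem (f @: P)) Q) /=.
rewrite -[X in X <= _]addr0; apply: lerD.
  rewrite le_eqVlt; apply/orP; left; apply/eqP; apply: eq_bigl => v.
  case vS: (v \in f @: P); rewrite ?andbF ?andbT //.
  by move/imsetP: vS => [j Pj ->]; rewrite PQ.
by apply: sumr_ge0 => v /andP[Qv _]; apply: F0.
Qed.

Lemma within1 (T : finType) (e : rel T) x y : within e 1 x y = (x == y) || e x y.
Proof.
rewrite /= ; congr orb; apply/existsP/idP => [[w /andP[/eqP -> ->]] // | exy].
by exists x; rewrite /= eqxx.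
Qed.

Lemma within2 (T : finType) (e : rel T) x w y : e x w -> e w y -> within e 2 x y.
Proof.
move=> h1 h2; rewrite /=; apply/orP; right; apply/existsP; exists w.
by rewrite h2 andbT -/(within e 1 x w) within1 h1 orbT.
Qed.

Section Graph.
Variable n : nat.
Hypothesis n0 : (1 < n)%N.
Local Open Scope nat_scope.
Local Notation N := (2 * (n ^ 2 + n + 1))%N.

Definition adjn (v x : nat) : bool :=
  let k := (x - n.+2)%N in
  [&& (v < n.+2)%N, (n.+2 <= x)%N, (k %/ n.+1 < (k %% n.+1).+1)%N &
      (v == k %/ n.+1) || (v == (k %% n.+1).+1)].

Definition G : rel 'I_N := fun x y =>
  (x != y) && [|| (n.+2 <= x)%N && (n.+2 <= y)%N, adjn x y | adjn y x].

Lemma G_sym : symmetric G.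
Proof. move=> x y; rewrite /G eq_sym [(n.+2 <= y) && _]andbC; congr andb; by case: (adjn x y); case: (adjn y x); rewrite ?orbT ?orbF. Qed.

Lemma ltN (i : 'I_n.+2) : (i < N)%N.
Proof. have := ltn_ord i; nia. Qed.

Definition u (i : 'I_n.+2) : 'I_N := Ordinal (ltN i).

Definition xvn (i j : nat) := (n.+2 + minn i j * n.+1 + (maxn i j).-1)%N.

Lemma xvn_lt (i j : 'I_n.+2) : i != j -> (xvn i j < N)%N.
Proof.
move=> ij; have := ltn_ord i; have := ltn_ord j; move: ij => /eqP ij0 hj hi.
have ij : (i : nat) <> j by move=> h; apply: ij0; apply: val_inj.
have : (minn i j <= n)%N by lia.
have : ((maxn i j).-1 <= n)%N by lia.
move=> h2 h1; have h3 : minn i j * n.+1 <= n * n.+1 by apply: leq_mul.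
have h4 : n < n * n by rewrite -{1}(muln1 n) ltn_pmul2l //; lia.
have -> : n ^ 2 = n * n by rewrite (expnD n 1 1) expn1.
rewrite /xvn; lia.
Qed.

Definition X (i j : 'I_n.+2) : 'I_N := insubd (u i) (xvn i j).


Lemma val_X i j : i != j -> val (X i j) = xvn i j.
Proof. by move=> ij; rewrite /X val_insubd xvn_lt. Qed.

Lemma XC i j : X i j = X j i.
Proof.
case: (eqVneq i j) => [-> // | ij]; apply: val_inj.
have ji : j != i by rewrite eq_sym.
by rewrite (val_X ij) (val_X ji) /xvn minnC maxnC.
Qed.

Lemma xvn_dec (i j : 'I_n.+2) : i != j ->
  ((xvn i j - n.+2) %/ n.+1 = minn i j /\ (xvn i j - n.+2) %% n.+1 = (maxn i j).-1)%N.
Proof.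
move=> ij; have := ltn_ord i; have := ltn_ord j; move: ij => /eqP ij0 hj hi.
have ij : (i : nat) <> j by move=> h; apply: ij0; apply: val_inj.
have hm : ((maxn i j).-1 < n.+1)%N by lia.
have -> : (xvn i j - n.+2 = minn i j * n.+1 + (maxn i j).-1)%N by rewrite /xvn; lia.
by rewrite divnMDl // divn_small // modnMDl modn_small // addn0.
Qed.

Lemma adj_X (i j : 'I_n.+2) : i != j -> adjn i (X i j) && adjn j (X i j).
Proof.
move=> ij; rewrite val_X //; have [d1 d2] := xvn_dec ij.
rewrite /adjn d1 d2.
have := ltn_ord i; have := ltn_ord j; move: ij => /eqP ij0 hj hi.
have ij : (i : nat) <> j by move=> h; apply: ij0; apply: val_inj.
apply/andP; split; apply/and4P; split; rewrite /xvn; try lia;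
  apply/orP; (have [hij|hij] := leqP i j; [left|right]); apply/eqP; lia.
Qed.

Lemma ij_nat (i j : 'I_n.+2) : i != j -> (i : nat) <> j.
Proof. by move=> /eqP ij h; apply: ij; apply: val_inj. Qed.

Lemma eu i y : G (u i) y -> adjn i y.
Proof.
have hi := ltn_ord i.
rewrite /G /= => /andP[_ /or3P[/andP[h _]|//|/and4P[_ h _ _]]]; lia.
Qed.

Lemma common (i j : 'I_n.+2) y : i != j -> G (u i) y -> G (u j) y -> y = X i j.
Proof.
move=> ij /eu hi /eu hj; apply: val_inj; rewrite val_X //.
move: hi hj; rewrite /adjn.
move: (divn_eq (y - n.+2) n.+1).
set a := (y - n.+2) %/ n.+1; set b := (y - n.+2) %% n.+1 => hy.
have := ij_nat ij.
move=> nij /and4P[_ hy2 hab /orP[] /eqP hia] /and4P[_ _ _ /orP[] /eqP hja];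
  rewrite /xvn; rewrite ?hia ?hja in nij *; try lia.
  by rewrite (minn_idPl (ltnW hab)) (maxn_idPr (ltnW hab)) /=; lia.
by rewrite (minn_idPr (ltnW hab)) (maxn_idPl (ltnW hab)) /=; lia.
Qed.

Lemma G_uX (i j : 'I_n.+2) : i != j -> G (u i) (X i j).
Proof.
move=> ij; have /andP[h1 _] := adj_X ij.
rewrite /G h1 orbT andbT; apply/eqP => /(congr1 val).
rewrite /= val_X // /xvn; have := ltn_ord i; lia.
Qed.

Lemma G_Xu (i j : 'I_n.+2) : i != j -> G (X i j) (u j).
Proof. by move=> ij; rewrite G_sym XC; apply: G_uX; rewrite eq_sym. Qed.

Lemma notG_uu i j : ~~ G (u i) (u j).
Proof.
have hi := ltn_ord i; have hj := ltn_ord j.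
apply/negP => /eu /and4P[_ h _ _]; move: h => /=; lia.
Qed.

Lemma dist2 (i j : 'I_n.+2) : i != j -> dist_is G (u i) (u j) 2.
Proof.
move=> ij; rewrite /dist_is (within2 (G_uX ij) (G_Xu ij)) /=.
rewrite -/(within G 1 (u i) (u j)) within1 negb_or notG_uu andbT.
apply/eqP => /(congr1 val) /=; exact: ij_nat.
Qed.

Lemma Gamma_eq (i j : 'I_n.+2) : i != j -> Gamma G 2 (u i) (u j) = [set X i j].
Proof.
move=> ij; apply/setP => y; rewrite !inE /dist_is /= -/(within G 0 y (u j)).
rewrite -/(within G 1 y (u j)) within1 /=.
apply/idP/idP.
  move=> /andP[h1 /andP[/orP[/eqP yj|h2] h3]]; first by rewrite yj eqxx in h3.
  by rewrite (common ij h1) // G_sym.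
move=> /eqP ->; rewrite G_uX // G_Xu // orbT /=.
apply/eqP => /(congr1 val) /=; rewrite val_X // /xvn; have := ltn_ord j; lia.
Qed.

End Graph.

Lemma X_inj (n : nat) (n1 : (1 < n)%N) (i : 'I_n.+2) :
  {in (fun j => j != i) &, injective (X n1 i)}.
Proof.
move=> j j' hj hj'.
have ij : i != j by rewrite eq_sym.
have ij' : i != j' by rewrite eq_sym.
move=> /(congr1 val); rewrite (val_X n1 ij) (val_X n1 ij').
have [d1 d2] := xvn_dec n1 ij.
have [d1' d2'] := xvn_dec n1 ij'.
move=> E; rewrite E in d1 d2; rewrite d1 in d1'; rewrite d2 in d2'.
have := ij_nat hj; have := ij_nat hj' => a b.
apply: val_inj => /=; lia.
Qed.

Theorem lemma31 (n : nat) :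
  prime_power n ->
  exists e : rel 'I_(2 * (n ^ 2 + n + 1)),
    [/\ simple_graph e, split_graph e,
      (forall (R : realFieldType) (p : 'I_(2 * (n ^ 2 + n + 1)) -> 'I_(2 * (n ^ 2 + n + 1)) -> R),
         fractional_guidance e p 2 ->
         (n.+1%:R / 2 <= max_outdeg_frac e p)%R)
    & (forall h : rel 'I_(2 * (n ^ 2 + n + 1)),
         weak_guidance e h 2 ->
         (n.+1%:R / 2 <= (max_outdeg_dir h)%:R :> rat)%R)].
Proof.
move=> [pr [k [ppr k0 En]]].
have n1 : (1 < n)%N.
  rewrite En; clear En; case: k k0 => // k _; rewrite expnS.
  have := prime_gt1 ppr; have : (0 < pr ^ k)%N by rewrite expn_gt0 prime_gt0.
  nia.
exists (@G n); split.
- split; first exact: (@G_sym n).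
  by move=> x; rewrite /G eqxx.
- exists [set x : 'I_(2 * (n ^ 2 + n + 1)) | (n.+2 <= x)%N]; split.
    by move=> x y; rewrite !inE /G => hx hy ->; rewrite hx hy.
  move=> x y; rewrite !inE -!ltnNge => hx hy; rewrite /G /adjn.
  apply/negP => /andP[_ /or3P[/andP[a b]|/and4P[_ a _ _]|/and4P[_ a _ _]]]; lia.
- move=> R p [p0 Hp].
  apply: (core (m := n.+2) (q := fun i j => p (u n1 i) (X n1 i j))) => //.
    move=> i j ij; have ji : j != i by rewrite eq_sym.
    have := Hp (u n1 i) (u n1 j) 2 (dist2 n1 ij) (leqnn 2) (leqnn 2).
    by rewrite (Gamma_eq n1 ij) (Gamma_eq n1 ji) !big_set1 (XC n1 j i).
  move=> i.
  apply: le_trans (_ : \sum_(v | G (u n1 i) v) p (u n1 i) v <= _)%R.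
    apply: (sum_inj_le (P := fun j => j != i) (@X_inj n n1 i)).
      by move=> j ji; apply: (G_uX n1); rewrite eq_sym.
    by move=> v; apply: p0.
  exact: (le_bigmax _ (fun w => \sum_(v | G w v) p w v) (u n1 i)).
- move=> h [ho Hw].
  apply: (core (m := n.+2) (q := fun i j => ((h (u n1 i) (X n1 i j))%:R : rat))) => //.
    move=> i j ij.
    have uij : u n1 i != u n1 j.
      by apply/eqP => /(congr1 val) E; move: ij => /eqP; apply; apply: val_inj.
    have [a [b [ab [x [y /and3P[hx hy exy]]]]]] :=
      Hw (u n1 i) (u n1 j) 2 uij (dist2 n1 ij) (leqnn 2).
    have nG := notG_uu n1 i j.
    case: a hx ab => [|[|a]] hx ab; case: b hy ab => [|[|b]] hy ab //=.
      move/eqP: hx => hx; rewrite -hx in exy.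
      rewrite within1 in hy; case/orP: hy => [/eqP yj | hjy].
        by rewrite -yj in exy; rewrite exy in nG.
      have ejy := ho _ _ hjy.
      have yX := common (n0:=n1) ij exy ejy.
      rewrite yX XC in hjy; rewrite hjy.
      by case: (h _ _) => /=; lra.
    move/eqP: hy => hy; rewrite -hy in exy.
    rewrite within1 in hx; case/orP: hx => [/eqP xi | hix].
      by rewrite -xi in exy; rewrite exy in nG.
    have eix := ho _ _ hix.
    have xX := common (n0:=n1) ij eix (etrans (G_sym _ _) exy).
    rewrite xX in hix; rewrite hix.
    by case: (h _ _) => /=; lra.
  move=> i.
  apply: le_trans (_ : (\sum_(v | predT v) ((h (u n1 i) v)%:R : rat) <= _)%R).
    apply: (sum_inj_le (P := fun j => j != i) (@X_inj n n1 i)) => // v _.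
  have -> : (\sum_(v | predT v) ((h (u n1 i) v)%:R : rat) =
             #|[set v | h (u n1 i) v]|%:R)%R.
    rewrite -natr_sum -sum1_card (big_mkcond (fun v => v \in _)) /=.
    by apply: congr1; apply: eq_bigr => v _; rewrite inE; case: (h _ _).
  rewrite ler_nat.
  rewrite /max_outdeg_dir; apply: (@leq_bigmax _ (fun w => #|[set v | h w v]|) (u n1 i)).
Qed.
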